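(* Suppose Assumptions (A1) and (A2) hold. For every $C>0$ and every nonempty $\mathscr{S}\in\mathcal{A}(k)$, $$\inf_{T\in\mathcal{T}^{1/2}_{\mathscr{S}}}\sup_{\tau\in\mathrm{Lip}_C(\mathbb{R}^d)}\mathcal{R}(T,\mathscr{S},\tau)\ge\frac{C}{2}\,\frac{1}{\#\mathcal{S}_P}\sum_{s\in\mathcal{S}_P\setminus\mathscr{S}}\|X_s-X_{N_{\mathscr{S}}(s)}\|.$$
   Context: Sites are indexed by $\mathcal{S}=\{1,\dots,S\}$. $\mathcal{S}_E\subseteq\mathcal{S}$ has $\mathrm{card}(\mathcal{S}_E)\ge2$, and $\mathcal{S}_P\subseteq\mathcal{S}$ is nonempty, with $\#\mathcal{S}_P=\mathrm{card}(\mathcal{S}_P)$. Each site $s$ has covariates $X_s\in\mathbb{R}^d$ and a known standard deviation $\sigma_s>0$. $\|\cdot\|$ is the Euclidean norm, and $\mathrm{Lip}_C(\mathbb{R}^d)$ is the set of $C$-Lipschitz functions $\mathbb{R}^d\to\mathbb{R}$ with respect to $\|\cdot\|$. (A1): the true conditional treatment effect function $\tau$ lies in $\mathrm{Lip}_C(\mathbb{R}^d)$. (A2): the $X_s$ are pairwise distinct. Fix an integer $1\le k<\mathrm{card}(\mathcal{S}_E)$ and set $\mathcal{A}(k)=\{\mathscr{S}\subset\mathcal{S}_E:\mathrm{card}(\mathscr{S})\le k\}$. For a nonempty $\mathscr{S}$ with elements $\mathscr{S}_1<\dots<\mathscr{S}_m$, the data are $\hat\tau_{\mathscr{S}}\sim\mathcal{N}_m(\tau_{\mathscr{S}},\mathrm{diag}(\sigma^2_{\mathscr{S}_1},\dots,\sigma^2_{\mathscr{S}_m}))$,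 where $\tau_{\mathscr{S}}=(\tau(X_{\mathscr{S}_i}))_{i=1}^m$. A treatment rule is a measurable map $T:\mathbb{R}^m\to[0,1]^{\#\mathcal{S}_P}$ with components $T_s$, $s\in\mathcal{S}_P$. $\mathcal{T}^{1/2}_{\mathscr{S}}$ is the set of treatment rules with $\mathbb{E}[T_s(U)]=1/2$ for all $s\in\mathcal{S}_P$ whenever $U\sim\mathcal{N}_m(0,\Sigma)$, for every positive definite diagonal $\Sigma$. Regret is $\mathcal{R}(T,\mathscr{S},\tau)=\frac{1}{\#\mathcal{S}_P}\sum_{s\in\mathcal{S}_P}\tau(X_s)\big(\mathbf{1}\{\tau(X_s)\ge0\}-\mathbb{E}_{\tau_{\mathscr{S}}}[T_s(\hat\tau_{\mathscr{S}})]\big)$. $N_{\mathscr{S}}(s)$ is the nearest neighbor of $s$ in $\mathscr{S}$ in Euclidean distance of covariates, with the smallest index chosen under ties. *)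

(* Defs.v *)
From HB Require Import structures.
From mathcomp Require Import all_boot all_order all_algebra.
From mathcomp Require Import all_classical all_reals all_analysis.
Set Implicit Arguments. Unset Strict Implicit. Unset Printing Implicit Defensive.
Import Order.TTheory GRing.Theory Num.Theory.
Local Open Scope classical_set_scope.
Local Open Scope ring_scope.

Section Defs.
Variable R : realType.

Definition enorm (d : nat) (v : 'rV[R]_d) : R :=
  Num.sqrt (\sum_(i < d) v ord0 i ^+ 2).

Definition LipC (d : nat) (C : R) : set ('rV[R]_d -> R) :=
  [set tau | forall x y, `|tau x - tau y| <= C * enorm (x - y)].

(* Expectation E[f(U)] for U ~ N_m(mu, diag(sd_1^2,...,sd_m^2)), i.e. for
   independent coordinates U_i ~ N(mu_i, sd_i^2), computed as the iterated
   Lebesgue integral against the product of the normal laws. *)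
Fixpoint gauss_expect (m : nat) : m.-tuple R -> m.-tuple R -> (m.-tuple R -> R) -> R :=
  match m with
  | 0 => fun _ _ f => f [tuple]
  | m'.+1 => fun mu sd f =>
      Rintegral (normal_prob (thead mu) (thead sd)) setT
        (fun x => gauss_expect (behead_tuple mu) (behead_tuple sd)
                    (fun t => f [tuple of x :: t]))
  end.

Variables (S d : nat) (X : 'I_S -> 'rV[R]_d) (sigma : 'I_S -> R)
  (SP : {set 'I_S}).

(* tau_{Sc} = (tau(X_{Sc_i}))_i with Sc_1 < ... < Sc_m (enum of a set of
   ordinals is increasing) *)
Definition tau_at (Sc : {set 'I_S}) (tau : 'rV[R]_d -> R) : #|Sc|.-tuple R :=
  [tuple tau (X (enum_val i)) | i < #|Sc|].

Definition sd_at (Sc : {set 'I_S}) : #|Sc|.-tuple R :=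
  [tuple sigma (enum_val i) | i < #|Sc|].

(* Treatment rules: T u s is the component T_s(u), relevant for s in SP.
   Measurable, [0,1]-valued. *)
Definition treatment_rule (Sc : {set 'I_S}) (T : #|Sc|.-tuple R -> 'I_S -> R) : Prop :=
  forall s, s \in SP ->
    measurable_fun setT (fun u => T u s) /\ (forall u, 0 <= T u s <= 1).

Definition Thalf (Sc : {set 'I_S}) : set (#|Sc|.-tuple R -> 'I_S -> R) :=
  [set T | treatment_rule T /\
     forall sd : #|Sc|.-tuple R, (forall i, 0 < tnth sd i) ->
       forall s, s \in SP ->
         gauss_expect [tuple 0 | _ < #|Sc|] sd (fun u => T u s) = 1 / 2].

Definition regret (Sc : {set 'I_S}) (T : #|Sc|.-tuple R -> 'I_S -> R)
  (tau : 'rV[R]_d -> R) : R :=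
  (#|SP|%:R)^-1 * \sum_(s in SP)
     tau (X s) * ((if 0 <= tau (X s) then 1 else 0)
                  - gauss_expect (tau_at Sc tau) (sd_at Sc) (fun u => T u s)).

(* Nearest neighbour of s in Sc, smallest index under ties
   (default s if Sc is empty, never used). *)
Definition nearest (Sc : {set 'I_S}) (s : 'I_S) : 'I_S :=
  odflt s [pick j | [&& j \in Sc,
     [forall j' in Sc, enorm (X s - X j) <= enorm (X s - X j')] &
     [forall j' in Sc,
        (enorm (X s - X j') <= enorm (X s - X j)) ==> (j <= j')%N]]].

End Defs.

Arguments Thalf {R S} SP Sc _.
Arguments regret {R S d} X sigma SP Sc T tau.
Arguments LipC {R} d C _.

(* Main.v *)
Require Import Defs.
From HB Require Import structures.
From mathcomp Require Import all_boot all_order all_algebra.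
From mathcomp Require Import all_classical all_reals all_analysis.
From mathcomp Require Import ring lra.
Import Order.TTheory GRing.Theory Num.Theory.
Local Open Scope classical_set_scope.
Local Open Scope ring_scope.

Lemma cs_ineq (R : realType) (d : nat) (a b : 'I_d -> R) :
  (\sum_i a i * b i) ^+ 2 <= (\sum_i a i ^+ 2) * (\sum_i b i ^+ 2).
Proof.
set A := \sum_i a i ^+ 2; set B := \sum_i b i ^+ 2; set P := \sum_i a i * b i.
have E t : \sum_i (a i * t + b i) ^+ 2 = t ^+ 2 * A + (2 * t) * P + B.
  rewrite (eq_bigr (fun i => t ^+ 2 * a i ^+ 2 + (2 * t) * (a i * b i) + b i ^+ 2)).
    by rewrite !big_split /= -!mulr_sumr.
  by move=> i _; ring.
have H t : 0 <= t ^+ 2 * A + (2 * t) * P + B.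
  by rewrite -E; apply: sumr_ge0 => i _; exact: sqr_ge0.
have A0 : 0 <= A by apply: sumr_ge0 => i _; exact: sqr_ge0.
have B0 : 0 <= B by apply: sumr_ge0 => i _; exact: sqr_ge0.
case: (eqVneq A 0) => [Aeq|Aneq].
  have ai i : a i = 0.
    have /psumr_eq0P h : A = 0 by [].
    by apply/eqP; rewrite -sqrf_eq0; apply/eqP; apply: h => // j _; exact: sqr_ge0.
  rewrite /P big1 ?Aeq; first by rewrite expr0n /= mul0r.
  by move=> i _; rewrite ai mul0r.
have Ap : 0 < A by rewrite lt_def Aneq A0.
have h := H (- P / A).
have h2 : 0 <= A * ((- P / A) ^+ 2 * A + (2 * (- P / A)) * P + B) by apply: mulr_ge0.
have e : A * ((- P / A) ^+ 2 * A + (2 * (- P / A)) * P + B) = A * B - P ^+ 2.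
  by field.
rewrite e in h2.
lra.
Qed.

Definition sq (R : realType) d (v : 'rV[R]_d) := \sum_(i < d) v ord0 i ^+ 2.

Lemma enorm_triangle (R : realType) (d : nat) (u v : 'rV[R]_d) :
  enorm (u + v) <= enorm u + enorm v.
Proof.
rewrite /enorm.
have A0 : 0 <= \sum_(i < d) u ord0 i ^+ 2 by apply: sumr_ge0 => i _; exact: sqr_ge0.
have B0 : 0 <= \sum_(i < d) v ord0 i ^+ 2 by apply: sumr_ge0 => i _; exact: sqr_ge0.
have cs := @cs_ineq _ _ (fun i => u ord0 i) (fun i => v ord0 i).
set A := \sum_(i < d) u ord0 i ^+ 2 in A0 cs *.
set B := \sum_(i < d) v ord0 i ^+ 2 in B0 cs *.
set P := \sum_(i < d) u ord0 i * v ord0 i in cs.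
have E : \sum_(i < d) (u + v) ord0 i ^+ 2 = A + 2 * P + B.
  rewrite (eq_bigr (fun i => u ord0 i ^+ 2 + 2 * (u ord0 i * v ord0 i) + v ord0 i ^+ 2)).
    by rewrite !big_split /= -!mulr_sumr.
  by move=> i _; rewrite mxE; ring.
have S0 : 0 <= A + 2 * P + B.
  by rewrite -E; apply: sumr_ge0 => i _; exact: sqr_ge0.
rewrite E.
have sA := sqrtr_ge0 A; have sB := sqrtr_ge0 B.
rewrite -(@ler_pXn2r _ 2) //; last by rewrite nnegrE addr_ge0.
  rewrite sqr_sqrtr //.
  have PAB : P <= Num.sqrt A * Num.sqrt B.
    rewrite -sqrtrM //; apply: (le_trans (ler_norm P)).
    by rewrite -sqrtr_sqr; apply: ler_wsqrtr.
  rewrite sqrrD !sqr_sqrtr //; lra.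
by rewrite nnegrE sqrtr_ge0.
Qed.
Theorem lemma2 (R : realType) (S d : nat) (X : 'I_S -> 'rV[R]_d)
  (sigma : 'I_S -> R) (SE SP : {set 'I_S}) (k : nat)
  (hsigma : forall s, 0 < sigma s)
  (hSE : (2 <= #|SE|)%N) (hSP : (0 < #|SP|)%N)
  (hk1 : (1 <= k)%N) (hk2 : (k < #|SE|)%N)
  (hA2 : injective X)
  (C : R) (hC : 0 < C)
  (Sc : {set 'I_S}) (hScE : Sc \subset SE) (hSc0 : (0 < #|Sc|)%N)
  (hSck : (#|Sc| <= k)%N) :
  (((C / 2) * ((#|SP|%:R)^-1 *
     \sum_(s in SP :\: Sc) enorm (X s - X (nearest X Sc s))))%:E
  <= ereal_inf [set ereal_sup [set (regret X sigma SP Sc T tau)%:E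
                               | tau in LipC d C]
               | T in Thalf SP Sc])%E.
Proof.
have [j0 j0S] : exists j0, j0 \in Sc.
  by apply/set0Pn; rewrite -card_gt0.
pose F x j := enorm (x - X j).
pose am x := Order.arg_min j0 [pred j | j \in Sc] (F x).
pose D x := F x (am x).
have amP x : am x \in Sc /\ forall j, j \in Sc -> D x <= F x j.
  by rewrite /D /am; case: arg_minP => // i iS H; split.
have enorm_ge0 (e : 'rV[R]_d) : 0 <= enorm e by exact: sqrtr_ge0.
have enormN (e : 'rV[R]_d) : enorm (- e) = enorm e.
  by rewrite /enorm; congr Num.sqrt; apply: eq_bigr => i _; rewrite mxE sqrrN.
have enorm0 : enorm (0 : 'rV[R]_d) = 0.
  by rewrite /enorm big1 ?sqrtr0 // => i _; rewrite mxE expr0n.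
have Dle x y : D x <= D y + enorm (x - y).
  have [ayS _] := amP y; have [_ Hx] := amP x.
  apply: (le_trans (Hx _ ayS)); rewrite /F.
  have -> : x - X (am y) = (x - y) + (y - X (am y)) by rewrite addrA subrK.
  by rewrite addrC enorm_triangle.
pose tau x := C * D x.
have tauL : tau \in LipC d C.
  rewrite inE /LipC /= => x y; rewrite /tau -mulrBr normrM gtr0_norm //.
  rewrite ler_pM2l // ler_norml; apply/andP; split.
    have := Dle y x; rewrite -opprB enormN; lra.
  have := Dle x y; lra.
have D0 x : 0 <= D x by exact: enorm_ge0.
have tauSc j : j \in Sc -> tau (X j) = 0.
  move=> jS; rewrite /tau; have [_ H] := amP (X j).
  have := H j jS; rewrite /F subrr enorm0 => h.
  have h' := D0 (X j).
  have -> : D (X j) = 0 by apply/le_anti; rewrite h h'.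
  by rewrite mulr0.
have near_le s : enorm (X s - X (nearest X Sc s)) <= D (X s).
  rewrite /nearest; case: pickP => [j /and3P[jS /forall_inP H _]|_] /=.
    have [aS _] := amP (X s); exact: H _ aS.
  by rewrite subrr enorm0.
apply: le_ereal_inf_tmp => _ [T TH <-].
have Eh s : s \in SP -> gauss_expect (tau_at X Sc tau) (sd_at sigma Sc) (fun u => T u s) = 1 / 2.
  move=> sSP.
  have -> : tau_at X Sc tau = [tuple 0 | _ < #|Sc|].
    apply: eq_from_tnth => i; rewrite !tnth_mktuple; apply: tauSc; exact: enum_valP.
  apply: (proj2 TH) => // i; rewrite tnth_mktuple; exact: hsigma.
apply: (@le_trans _ _ (regret X sigma SP Sc T tau)%:E); last first.
  by apply: ereal_sup_ubound; exists tau => //; move: tauL; rewrite inE.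
rewrite lee_fin /regret.
have -> : \sum_(s in SP) tau (X s) * ((if 0 <= tau (X s) then 1 else 0) -
     gauss_expect (tau_at X Sc tau) (sd_at sigma Sc) (fun u => T u s))
   = \sum_(s in SP) (C / 2) * D (X s).
  apply: eq_bigr => s sSP; rewrite Eh // ifT; last by rewrite /tau mulr_ge0 // ltW.
  by rewrite /tau; field.
have Z : \sum_(s in SP :&: Sc) (C / 2 * D (X s)) = 0.
  apply: big1 => s; rewrite inE => /andP[_ sS]; have := tauSc s sS; rewrite /tau => h.
  by rewrite mulrAC h mul0r.
rewrite [X in _ <= _ * X](big_setID (A:=SP) Sc) /= Z add0r.
rewrite -mulr_sumr mulrCA.
apply: ler_wpM2l; first by rewrite invr_ge0.
apply: ler_wpM2l; first by rewrite divr_ge0 // ltW.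
by apply: ler_sum => s _; exact: near_le.
Qed.
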